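(* Let $\mathbf t$ be a hyper-term, $P$ a hyper-assertion and $Q$ a post hyper-assertion, with $\mathrm{pvar}(P)\cap\mathrm{mods}(\mathbf t)=\emptyset$. Then $$\mathrm{proj}(\mathbf t)\wedge\mathrm{wp}\,\mathbf t\,\{\lambda\mathbf r.\ Q(\mathbf r)\Rightarrow P\}\ \vdash\ \big(\mathrm{wp}\,\mathbf t\,\{Q\}\Rightarrow P\big).$$
   Context: Setting. $\mathrm{Val}=\mathbb{Z}$; $\mathrm{PVar}$ is a countably infinite set of program variables; a store is a function $s:\mathrm{PVar}\to\mathrm{Val}$; indices are $\mathrm{Idx}=\mathbb{N}$. Terms of a first-order imperative language are generated by $t ::= v \mid x \mid * \mid t\oplus t \mid \mathtt{skip}\mid x:=t \mid t;t \mid \mathtt{if}\ t\ \mathtt{then}\ t\ \mathtt{else}\ t \mid \mathtt{while}\ t\ \mathtt{do}\ t$, with a nondeterministic big-step semantics $t,s\Downarrow v,s'$ ($t$ run from store $s$ may terminate with return value $v$ and final store $s'$; $*$ returns an arbitrary integer). A hyper-term $\mathbf t$ is a finitely supported partial function from $\mathrm{Idx}$ to terms, with support $\mathrm{supp}(\mathbf t)$; a hyper-store is a total function $\mathbf s:\mathrm{Idx}\to\mathrm{Store}$; a hyper-return-value is a finitely supported partial function $\mathbf v:\mathrm{Idx}\rightharpoonup\mathrm{Val}$. $\mathbf t,\mathbf s\Downarrow\mathbf v,\mathbf s'$ holds iff for every $i\in\mathrm{supp}(\mathbf t)$, $\mathbf t(i),\mathbf s(i)\Downarrow\mathbf v(i),\mathbf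 s'(i)$, and for every $i\notin\mathrm{supp}(\mathbf t)$, $\mathbf s'(i)=\mathbf s(i)$ and $\mathbf v(i)$ is undefined. A hyper-assertion is a predicate on hyper-stores; a post hyper-assertion is an upward-closed map $Q$ from hyper-return-values to hyper-assertions (if $Q(\mathbf v)(\mathbf s)$ and $\mathbf v'$ agrees with $\mathbf v$ on $\mathrm{supp}(\mathbf v)$ then $Q(\mathbf v')(\mathbf s)$). Connectives are pointwise. Entailment $P\vdash R$ means $\forall\mathbf s.\ P(\mathbf s)\Rightarrow R(\mathbf s)$. $\mathrm{wp}\,\mathbf t\,\{Q\}(\mathbf s):\iff\forall\mathbf v,\mathbf s'.\ (\mathbf t,\mathbf s\Downarrow\mathbf v,\mathbf s')\Rightarrow Q(\mathbf v)(\mathbf s')$. Variables. $\mathrm{mods}(t)$ is the set of program variables assigned (occurring on the left of $:=$) in $t$; $\mathrm{mods}(\mathbf t)=\{(x,i)\mid i\in\mathrm{supp}(\mathbf t),\ x\in\mathrm{mods}(\mathbf t(i))\}$. $\mathrm{pvar}(P)=\{(x,i)\in\mathrm{PVar}\times\mathrm{Idx}\mid \exists\mathbf s,v.\ P(\mathbf s)\not\Leftrightarrow P(\mathbf s[i:\mathbf s(i)[x:v]])\}$. Projectability. $\mathrm{proj}(\mathbf t)(\mathbf s):\iff\exists\mathbf v,\mathbf s'.\ \mathbf t,\mathbf s\Downarrow\mathbf v,\mathbf s'$. *)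

(* Defs.v *)
From Stdlib Require Import ZArith List.
Import ListNotations.
Open Scope Z_scope.

Definition Val := Z.
Definition PVar := nat.
Definition Store := PVar -> Val.
Definition Idx := nat.

Definition upd (s : Store) (x : PVar) (v : Val) : Store :=
  fun y => if Nat.eqb y x then v else s y.

(* Terms; the binary operator symbol (+) is given by its interpretation. *)
Inductive term : Type :=
| TVal : Val -> term
| TVar : PVar -> term
| TStar : term
| TBin : (Val -> Val -> Val) -> term -> term -> term
| TSkip : term
| TAssign : PVar -> term -> term
| TSeq : term -> term -> term
| TIf : term -> term -> term -> term
| TWhile : term -> term -> term.

(* Conventions: a condition is true iff its value is nonzero; skip and while
   return 0; assignment returns the assigned value; t1;t2 returns the value of t2. *)
Inductive eval : term -> Store -> Val -> Store -> Prop :=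
| E_Val : forall v s, eval (TVal v) s v s
| E_Var : forall x s, eval (TVar x) s (s x) s
| E_Star : forall v s, eval TStar s v s
| E_Bin : forall op t1 t2 s s1 s2 v1 v2,
    eval t1 s v1 s1 -> eval t2 s1 v2 s2 -> eval (TBin op t1 t2) s (op v1 v2) s2
| E_Skip : forall s, eval TSkip s 0 s
| E_Assign : forall x t s v s1,
    eval t s v s1 -> eval (TAssign x t) s v (upd s1 x v)
| E_Seq : forall t1 t2 s s1 s2 v1 v2,
    eval t1 s v1 s1 -> eval t2 s1 v2 s2 -> eval (TSeq t1 t2) s v2 s2
| E_IfT : forall b t1 t2 s s1 vb v s2,
    eval b s vb s1 -> vb <> 0 -> eval t1 s1 v s2 -> eval (TIf b t1 t2) s v s2
| E_IfF : forall b t1 t2 s s1 v s2,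
    eval b s 0 s1 -> eval t2 s1 v s2 -> eval (TIf b t1 t2) s v s2
| E_WhileT : forall b c s s1 vb vc s2 v s3,
    eval b s vb s1 -> vb <> 0 -> eval c s1 vc s2 ->
    eval (TWhile b c) s2 v s3 -> eval (TWhile b c) s v s3
| E_WhileF : forall b c s s1,
    eval b s 0 s1 -> eval (TWhile b c) s 0 s1.

Fixpoint mods (t : term) : list PVar :=
  match t with
  | TVal _ | TVar _ | TStar | TSkip => []
  | TBin _ t1 t2 | TSeq t1 t2 | TWhile t1 t2 => mods t1 ++ mods t2
  | TAssign x t1 => x :: mods t1
  | TIf b t1 t2 => mods b ++ mods t1 ++ mods t2
  end.

Definition fin_supp {A : Type} (f : Idx -> option A) : Prop :=
  exists N : nat, forall i : nat, (N <= i)%nat -> f i = None.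

Definition hterm := { f : Idx -> option term | fin_supp f }.
Definition hterm_fun (t : hterm) : Idx -> option term := proj1_sig t.
Coercion hterm_fun : hterm >-> Funclass.

Definition hstore := Idx -> Store.
Definition hval := Idx -> option Val.

Definition hassn := hstore -> Prop.
Definition post := hval -> hassn.

Definition upward_closed (Q : post) : Prop :=
  forall (v v' : hval), fin_supp v -> fin_supp v' ->
    (forall i a, v i = Some a -> v' i = Some a) ->
    forall s, Q v s -> Q v' s.

Definition heval (t : hterm) (s : hstore) (v : hval) (s' : hstore) : Prop :=
  forall i : Idx,
    match t i with
    | Some ti => exists vi, v i = Some vi /\ eval ti (s i) vi (s' i)
    | None => s' i = s i /\ v i = None
    end.

Definition hmods (t : hterm) (x : PVar) (i : Idx) : Prop :=
  exists ti, t i = Some ti /\ In x (mods ti).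

Definition hupd (s : hstore) (i : Idx) (x : PVar) (v : Val) : hstore :=
  fun j => if Nat.eqb j i then upd (s i) x v else s j.

Definition pvar (P : hassn) (x : PVar) (i : Idx) : Prop :=
  exists (s : hstore) (v : Val), ~ (P s <-> P (hupd s i x v)).

Definition wp (t : hterm) (Q : post) : hassn :=
  fun s => forall v s', heval t s v s' -> Q v s'.

Definition proj (t : hterm) : hassn :=
  fun s => exists v s', heval t s v s'.

Definition entails (P R : hassn) : Prop := forall s, P s -> R s.

(* Main.v *)
Require Import Defs.
From Stdlib Require Import ZArith List Arith Lia FunctionalExtensionality Classical.

Lemma eval_mods : forall t s v s', eval t s v s' ->
  forall y, ~ In y (mods t) -> s' y = s y.
Proof.
  induction 1; intros y Hy; simpl in Hy; auto;
  repeat rewrite in_app_iff in Hy.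
  all: try (rewrite IHeval2 by tauto; rewrite IHeval1 by tauto; reflexivity).
  all: try (rewrite IHeval1 by tauto; reflexivity).
  all: try (apply IHeval; tauto).
  - unfold upd. destruct (Nat.eqb y x) eqn:E.
    + apply Nat.eqb_eq in E. subst. exfalso; apply Hy; left; auto.
    + apply IHeval; tauto.
  - rewrite IHeval3 by (simpl; rewrite in_app_iff; tauto).
    rewrite IHeval2 by tauto; rewrite IHeval1 by tauto; reflexivity.
Qed.

Lemma lemA (P : hassn) (i : Idx) : forall L (s s' : hstore),
  (forall j, j <> i -> s' j = s j) ->
  (forall y, ~ In y L -> s' i y = s i y) ->
  (forall x, In x L -> ~ pvar P x i) -> (P s <-> P s').
Proof.
  induction L as [|x L IH]; intros s s' H1 H2 H3.
  - assert (s = s') as ->; [|tauto].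
    extensionality j. destruct (Nat.eq_dec j i).
    + subst. extensionality y. symmetry; apply H2; auto.
    + symmetry; auto.
  - assert (HP : P s <-> P (hupd s i x (s' i x))).
    { apply NNPP. intro Hc. apply (H3 x (or_introl eq_refl)).
      exists s, (s' i x). exact Hc. }
    rewrite HP. apply IH.
    + intros j Hj. unfold hupd. rewrite (proj2 (Nat.eqb_neq j i) Hj). auto.
    + intros y Hy. unfold hupd. rewrite Nat.eqb_refl. unfold upd.
      destruct (Nat.eqb y x) eqn:E.
      * apply Nat.eqb_eq in E; subst; auto.
      * apply Nat.eqb_neq in E. apply H2. simpl. intuition.
    + intros; apply H3; simpl; auto.
Qed.

Lemma lemB (P : hassn) : forall N (s s' : hstore),
  (forall j, (N <= j)%nat -> s' j = s j) ->
  (forall j, (j < N)%nat -> exists L, (forall y, ~ In y L -> s' j y = s j y) /\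
        (forall y, In y L -> ~ pvar P y j)) ->
  (P s <-> P s').
Proof.
  induction N as [|N IH]; intros s s' H1 H2.
  - assert (s = s') as ->; [|tauto].
    extensionality j. symmetry; apply H1; lia.
  - set (s'' := fun j => if Nat.eqb j N then s j else s' j).
    assert (HA : P s <-> P s'').
    { apply IH.
      + intros j Hj. unfold s''. destruct (Nat.eqb j N) eqn:E; auto.
        apply Nat.eqb_neq in E. apply H1. lia.
      + intros j Hj. destruct (H2 j ltac:(lia)) as [L [HL1 HL2]].
        exists L; split; auto. intros y Hy. unfold s''.
        rewrite (proj2 (Nat.eqb_neq j N) ltac:(lia)). auto. }
    rewrite HA. destruct (H2 N ltac:(lia)) as [L [HL1 HL2]].
    apply (lemA P N L).
    + intros j Hj. unfold s''. rewrite (proj2 (Nat.eqb_neq j N) Hj). auto.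
    + intros y Hy. unfold s''. rewrite Nat.eqb_refl. auto.
    + auto.
Qed.

Theorem mainTheorem4 (t : hterm) (P : hassn) (Q : post) :
  upward_closed Q ->
  (forall x i, pvar P x i -> hmods t x i -> False) ->
  entails
    (fun s => proj t s /\ wp t (fun r s' => Q r s' -> P s') s)
    (fun s => wp t Q s -> P s).
Proof.
  intros _ Hd s [[v [s' Hev]] Hw] HQ.
  assert (HP : P s') by (apply (Hw v s' Hev), HQ, Hev).
  destruct t as [f [N HN]]. unfold heval, hterm_fun in Hev; simpl in Hev.
  refine (proj2 (lemB P N s s' _ _) HP).
  - intros j Hj. specialize (Hev j). rewrite (HN j Hj) in Hev. tauto.
  - intros j Hj. specialize (Hev j). destruct (f j) as [tj|] eqn:E.
    + destruct Hev as [vi [_ Hj']]. exists (mods tj). split.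
      * intros y Hy. eapply eval_mods; eauto.
      * intros y Hy Hp. apply (Hd y j Hp). exists tj. simpl. auto.
    + exists nil. split; [|simpl; tauto]. intros y _. destruct Hev as [->]; auto.
Qed.
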